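(* There exist preference-based argumentation frameworks $AF_p=(AR,Attacks,Prefs)$ and $AF'_p=(AR',Attacks',Prefs')$ with $AF_p\preceq_{RMP}AF'_p$ such that $\tau_{preferred}(AF'_p)\subseteq AR$ but $\tau_{preferred}(AF'_p)\neq\tau_{preferred}(AF_p)$.
   Context: A preference-based argumentation framework is a triple $(AR,Attacks,Prefs)$ where $AR$ is a finite set of arguments, $Attacks\subseteq AR\times AR$ (with $(b,a)\in Attacks$ read ''$b$ attacks $a$''), and $Prefs$ is a partial or total ordering on $AR$, written $a\succeq b$. $\tau_{preferred}(AF_p)=\{a\in AR: \text{for every } b\in AR,\ (b,a)\in Attacks\text{ implies } a\succeq b\}$. $AF_p\preceq_{NP}AF'_p$ (normal expansion) iff $AR\subseteq AR'$, $Attacks\subseteq Attacks'$, every $(a,b)\in Attacks'\setminus Attacks$ has $a\in AR'\setminus AR$ or $b\in AR'\setminus AR$, $Prefs\subseteq Prefs'$, and every $(a\succeq b)\in Prefs'\setminus Prefs$ has $a\in AR'\setminus AR$ or $b\in AR'\setminus AR$. An attack sequence in $(AR,Attacks)$ is $\langle a_1,\dots,a_n\rangle$ of pairwise distinct arguments with $(a_i,a_{i+1})\in Attacks$; $b$ is reachable from $a$ iff such a sequence has $a_1=a$, $a_n=b$. An attack cycle is $\langle a_1,\dots,a_n\rangle$ with $(a_i,a_{i+1})\in Attacks$, $a_1=a_n$ and $a_1,\dots,a_{n-1}$ pairwise distinct; $\mathcal C(AR,Attacks)$ is the set of attack cycles. $AF_p\preceq_{RMP}AF'_p$ (rational man's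 expansion) iff $AF_p\preceq_{NP}AF'_p$, $\mathcal C(AR',Attacks')=\mathcal C(AR,Attacks)$, and for all $a\in AR$, $b\in AR'\setminus AR$ with $b$ reachable from $a$ in $(AR',Attacks')$, $a$ occurs in no attack cycle of $(AR',Attacks')$. *)

(* Defs.v *)
From mathcomp Require Import all_boot.
Set Implicit Arguments. Unset Strict Implicit. Unset Printing Implicit Defensive.

(* A preference-based argumentation framework (AR, Attacks, Prefs).
   (a, b) \in prefs F  is read  a ⪰ b ;  (b, a) \in atts F  is read  b attacks a. *)
Record paf := PAF { args : seq nat; atts : seq (nat * nat); prefs : seq (nat * nat) }.

Definition wf_paf (F : paf) : Prop :=
  (forall a b, (a, b) \in atts F -> a \in args F /\ b \in args F) /\
  (forall a b, (a, b) \in prefs F -> a \in args F /\ b \in args F) /\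
  (forall a, a \in args F -> (a, a) \in prefs F) /\
  (forall a b, (a, b) \in prefs F -> (b, a) \in prefs F -> a = b) /\
  (forall a b c, (a, b) \in prefs F -> (b, c) \in prefs F -> (a, c) \in prefs F).

Definition in_tau_preferred (F : paf) (a : nat) : Prop :=
  a \in args F /\
  forall b, b \in args F -> (b, a) \in atts F -> (a, b) \in prefs F.

Definition normal_expansion (F F' : paf) : Prop :=
  {subset args F <= args F'} /\
  {subset atts F <= atts F'} /\
  (forall a b, (a, b) \in atts F' -> (a, b) \notin atts F ->
     (a \in args F') && (a \notin args F) \/ (b \in args F') && (b \notin args F)) /\
  {subset prefs F <= prefs F'} /\
  (forall a b, (a, b) \in prefs F' -> (a, b) \notin prefs F ->
     (a \in args F') && (a \notin args F) \/ (b \in args F') && (b \notin args F)).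

Definition attack_sequence (AR : seq nat) (Att : seq (nat * nat)) (s : seq nat) : Prop :=
  match s with
  | [::] => False
  | x :: t => all (fun y => y \in AR) s /\ uniq s /\
              path (fun u v => (u, v) \in Att) x t
  end.

Definition reachable (AR : seq nat) (Att : seq (nat * nat)) (a b : nat) : Prop :=
  exists s, attack_sequence AR Att s /\ head a s = a /\ last a s = b.

Definition attack_cycle (AR : seq nat) (Att : seq (nat * nat)) (s : seq nat) : Prop :=
  match s with
  | [::] => False
  | x :: t => 2 <= size s /\ all (fun y => y \in AR) s /\
              path (fun u v => (u, v) \in Att) x t /\
              last x t = x /\ uniq (belast x t)
  end.

Definition rm_expansion (F F' : paf) : Prop :=
  normal_expansion F F' /\
  (forall s, attack_cycle (args F') (atts F') s <-> attack_cycle (args F) (atts F) s) /\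
  (forall a b, a \in args F -> b \in args F' -> b \notin args F ->
     reachable (args F') (atts F') a b ->
     ~ (exists s, attack_cycle (args F') (atts F') s /\ a \in s)).

(* Main.v *)
Require Import Defs.
From mathcomp Require Import all_boot.

Lemma path_rank (A : seq (nat*nat)) (r : nat -> nat) :
  (forall u v, (u, v) \in A -> r u < r v) ->
  forall t x, path (fun u v => (u, v) \in A) x t -> t != [::] -> r x < r (last x t).
Proof.
move=> H; elim=> [//|y t IH] x /= /andP[Hxy Hp] _.
case: t IH Hp => [|z t] IH Hp; first exact: H.
apply: ltn_trans (H _ _ Hxy) _; exact: IH.
Qed.

Lemma no_cycle (AR : seq nat) (A : seq (nat*nat)) (r : nat -> nat) :
  (forall u v, (u, v) \in A -> r u < r v) ->
  forall s, ~ attack_cycle AR A s.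
Proof.
move=> H [|x t] //= [Hs [_ [Hp [Hl _]]]].
have := @path_rank A r H t x Hp. case: t Hs Hp Hl => [//|y t] _ Hp Hl.
by rewrite Hl ltnn => /(_ isT).
Qed.

Definition rk (n : nat) := match n with 1 => 0 | 3 => 1 | _ => 2 end.

Ltac brute := repeat (case/orP || case/andP || (move/eqP => ?; subst)) ; rewrite ?inE //=.

Theorem proposition50 :
  exists F F' : paf,
    wf_paf F /\ wf_paf F' /\ rm_expansion F F' /\
    (forall a, in_tau_preferred F' a -> a \in args F) /\
    ~ (forall a, in_tau_preferred F' a <-> in_tau_preferred F a).
Proof.
exists (PAF [:: 1; 2] [::] [:: (1,1); (2,2)]).
exists (PAF [:: 1; 2; 3] [:: (1,3); (3,2)] [:: (1,1); (2,2); (3,3)]).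
have Hr : forall u v, (u, v) \in [:: (1,3); (3,2)] -> rk u < rk v.
  by move=> u v; rewrite !inE !xpair_eqE; brute.
have Hr0 : forall u v, (u, v) \in ([::] : seq (nat*nat)) -> rk u < rk v by [].
split; [|split; [|split; [|split]]].
- rewrite /wf_paf /=; split; [|split; [|split; [|split]]].
  + by move=> a b; rewrite ?inE ?xpair_eqE; brute.
  + by move=> a b; rewrite ?inE ?xpair_eqE; brute.
  + by move=> a; rewrite ?inE ?xpair_eqE; brute.
  + by move=> a b; rewrite ?inE ?xpair_eqE; brute; rewrite ?inE ?xpair_eqE; brute.
  + by move=> a b c; rewrite ?inE ?xpair_eqE; brute; rewrite ?inE ?xpair_eqE; brute.
- rewrite /wf_paf /=; split; [|split; [|split; [|split]]].
  + by move=> a b; rewrite ?inE ?xpair_eqE; brute.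
  + by move=> a b; rewrite ?inE ?xpair_eqE; brute.
  + by move=> a; rewrite ?inE ?xpair_eqE; brute.
  + by move=> a b; rewrite ?inE ?xpair_eqE; brute; rewrite ?inE ?xpair_eqE; brute.
  + by move=> a b c; rewrite ?inE ?xpair_eqE; brute; rewrite ?inE ?xpair_eqE; brute.
- split; [|split].
  + rewrite /normal_expansion /=; split; [|split; [|split; [|split]]].
    * by move=> a; rewrite !inE; brute.
    * by [].
    * move=> a b H H2; move: H2 H; rewrite !inE !xpair_eqE =>H2; brute; move: H2; rewrite /= ?inE; try by [left|right].
    * by move=> a; rewrite !inE => /orP[->|->]; rewrite ?orbT.
    * move=> a b H H2; move: H2 H; rewrite !inE !xpair_eqE =>H2; brute; move: H2; rewrite /= ?inE; try by [left|right].
  + move=> s; split => H; exfalso; [exact: (no_cycle _ _ _ Hr _ H) | exact: (no_cycle _ _ _ Hr0 _ H)].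
  + move=> a b _ _ _ _ [s [Hs _]]; exact: (no_cycle _ _ _ Hr _ Hs).
- move=> a [/=]; rewrite !inE; case/orP; first by move=> ->.
  case/orP; first by move=> ->; rewrite orbT.
  move/eqP=> -> /(_ 1 isT isT). by [].
- move=> /(_ 2) [_ /(_ _)] H.
  have [_ /(_ 3 isT isT)] : in_tau_preferred (PAF [:: 1; 2; 3] [:: (1,3); (3,2)] [:: (1,1); (2,2); (3,3)]) 2.
    by apply: H; split => //.
  by [].
Qed.
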